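(* Let $N\ge 2$, $n\ge1$. For $i=1,\dots,N$ let $f_i:\mathbb{R}^n\to\mathbb{R}$ be twice continuously differentiable with $\mu I_n\preceq\nabla^2 f_i(x)\preceq L I_n$ for all $x$ ($0<\mu\le L$), and with Lipschitz Hessians: $\|\nabla^2 f_i(x)-\nabla^2 f_i(y)\|\le \bar L\|x-y\|$ for all $x,y$ and all $i$. Let $f=\frac1N\sum_i f_i$ with unique minimizer $x^\star$. For $\mathbf{x}\in\mathbb{R}^{N\times n}$ with rows $x_1,\dots,x_N$ define $H_{tr}(\mathbf{x})=\frac1N\sum_{i=1}^N\nabla^2 f_i(x_i)$ and $H_{app}(\mathbf{x})=\big(\frac1N\sum_{i=1}^N(\nabla^2 f_i(x_i))^{-1}\big)^{-1}$, and assume there is $\gamma$ with $\|H_{tr}(\mathbf{x})-H_{app}(\mathbf{x})\|\le\gamma$ for all $\mathbf{x}\in\mathbb{R}^{N\times n}$. Let $W\in\mathbb{R}^{N\times N}$ be a symmetric doubly stochastic consensus matrix of a connected undirected graph with $\sigma=\|W-\frac1N\mathbf{1}\mathbf{1}^T\|_2<1$. Consider the Network-GIANT iteration $$\mathbf{x}_{k+1}=W\mathbf{x}_k-\eta\,\mathbf{y}_k,\qquad \mathbf{s}_{k+1}=W\mathbf{s}_k+\nabla_{k+1}-\nabla_k,\qquad \mathbf{s}_0=\nabla_0,$$ where $\nabla_k\in\mathbb{R}^{N\times n}$ has $i$-th row $\nabla f_i(x_i^k)$ ($x_i^k$ the $i$-th row of $\mathbf{x}_k$, gradients as row vectors) and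 $\mathbf{y}_k$ has $i$-th row $s_i^k(\nabla^2 f_i(x_i^k))^{-1}$ ($s_i^k$ the $i$-th row of $\mathbf{s}_k$). Let $\bar x_k=\frac1N\mathbf{1}^T\mathbf{x}_k$ and $g_k=\frac1N\mathbf{1}^T\nabla_k$. If $\gamma<\mu$ and $0<\eta<1$, then for every $k\ge0$, $$\|\bar x_{k+1}-x^\star\|\le\Big(1-\eta\big(1-\tfrac{\gamma}{\mu}\big)\Big)\|\bar x_k-x^\star\|+\frac{\eta\bar L}{\mu\sqrt N}\|\mathbf{x}_k-\mathbf{1}\bar x_k\|\,\|\bar x_k-x^\star\|+\frac{\eta\bar L}{2\mu}\|\bar x_k-x^\star\|^2+\frac{\eta}{\mu\sqrt N}\|\mathbf{s}_k-\mathbf{1}g_k\|+\frac{\eta L}{\mu\sqrt N}\|\mathbf{x}_k-\mathbf{1}\bar x_k\|.$$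
   Context: Vector norms $\|\cdot\|$ are Euclidean 2-norms; for matrices $\|\cdot\|$ denotes the Frobenius norm and $\|\cdot\|_2$ the spectral norm. $\mathbf{1}\in\mathbb{R}^N$ is the all-ones column vector. Points of $\mathbb{R}^n$ are treated as row vectors where convenient. *)

(* Defs.v *)
From HB Require Import structures.
From mathcomp Require Import all_boot all_order all_algebra.
From mathcomp Require Import all_classical all_reals all_analysis.
Set Implicit Arguments. Unset Strict Implicit. Unset Printing Implicit Defensive.
Import Order.TTheory GRing.Theory Num.Theory.
Import numFieldNormedType.Exports.
Local Open Scope classical_set_scope.
Local Open Scope ring_scope.

Section Defs.
Variable R : realType.

(* Frobenius norm of a matrix; for a row vector this is the Euclidean norm. *)
Definition frob (m k : nat) (A : 'M[R]_(m, k)) : R :=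
  Num.sqrt (\sum_(i < m) \sum_(j < k) A i j ^+ 2).

Definition specnorm (m : nat) (A : 'M[R]_m) : R :=
  sup [set frob (A *m v) | v in [set v : 'cV[R]_m | frob v <= 1]].

Definition basis_vec (n : nat) (j : 'I_n) : 'rV[R]_n := delta_mx 0 j.

Definition partial (n : nat) (j : 'I_n) (f : 'rV[R]_n -> R) : 'rV[R]_n -> R :=
  fun x => derive f x (basis_vec j).

Definition gradient (n : nat) (f : 'rV[R]_n -> R) (x : 'rV[R]_n) : 'rV[R]_n :=
  \row_j partial j f x.

Definition hessian (n : nat) (f : 'rV[R]_n -> R) (x : 'rV[R]_n) : 'M[R]_n :=
  \matrix_(j, l) partial l (partial j f) x.

Definition C2 (n : nat) (f : 'rV[R]_n -> R) : Prop :=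
  [/\ forall x, differentiable f x,
      forall (j : 'I_n) x, differentiable (partial j f) x &
      forall (j l : 'I_n), continuous (partial l (partial j f))].

Definition loewner_between (n : nat) (mu L : R) (A : 'M[R]_n) : Prop :=
  forall v : 'rV[R]_n,
    mu * frob v ^+ 2 <= (v *m A *m v^T) 0 0 <= L * frob v ^+ 2.

Definition rowv (N n : nat) (i : 'I_N) (X : 'M[R]_(N, n)) : 'rV[R]_n := row i X.

Definition grad_stack (N n : nat) (f : 'I_N -> 'rV[R]_n -> R) (X : 'M[R]_(N, n))
  : 'M[R]_(N, n) := \matrix_(i, j) gradient (f i) (row i X) 0 j.

Definition newton_stack (N n : nat) (f : 'I_N -> 'rV[R]_n -> R)
  (X S : 'M[R]_(N, n)) : 'M[R]_(N, n) :=
  \matrix_(i, j) (row i S *m invmx (hessian (f i) (row i X))) 0 j.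

Definition H_tr (N n : nat) (f : 'I_N -> 'rV[R]_n -> R) (X : 'M[R]_(N, n)) : 'M[R]_n :=
  N%:R^-1 *: \sum_(i < N) hessian (f i) (row i X).

Definition H_app (N n : nat) (f : 'I_N -> 'rV[R]_n -> R) (X : 'M[R]_(N, n)) : 'M[R]_n :=
  invmx (N%:R^-1 *: \sum_(i < N) invmx (hessian (f i) (row i X))).

Definition avg (N n : nat) (X : 'M[R]_(N, n)) : 'rV[R]_n :=
  N%:R^-1 *: (const_mx 1 : 'rV[R]_N) *m X.

Definition ones_times (N n : nat) (x : 'rV[R]_n) : 'M[R]_(N, n) :=
  (const_mx 1 : 'cV[R]_N) *m x.

Definition consensus_matrix (N : nat) (W : 'M[R]_N) : Prop :=
  [/\ W^T = W,
      forall i j, 0 <= W i j,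
      forall i, \sum_(j < N) W i j = 1,
      forall j, \sum_(i < N) W i j = 1 &
      exists e : rel 'I_N,
        [/\ symmetric e, irreflexive e,
            forall i j, i != j -> (0 < W i j) = e i j &
            forall i j, connect e i j]].

End Defs.

(* Main.v *)
Require Import Defs.
From HB Require Import structures.
From mathcomp Require Import all_boot all_order all_algebra.
From mathcomp Require Import all_classical all_reals all_analysis.
From mathcomp Require Import ring lra.
Import Order.TTheory GRing.Theory Num.Theory.
Import numFieldNormedType.Exports.
Local Open Scope classical_set_scope.
Local Open Scope ring_scope.
Set Implicit Arguments. Unset Strict Implicit. Unset Printing Implicit Defensive.
Section LA.
Variable R : realType.

Lemma sumsq_ge0 (I : finType) (a : I -> R) : 0 <= \sum_j a j ^+ 2.
Proof. by apply: sumr_ge0 => j _; exact: sqr_ge0. Qed.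

Lemma CS_sq (I : finType) (a b : I -> R) :
  (\sum_j a j * b j) ^+ 2 <= (\sum_j a j ^+ 2) * (\sum_j b j ^+ 2).
Proof.
set A := \sum_j a j ^+ 2; set B := \sum_j b j ^+ 2; set C := \sum_j a j * b j.
have A0 : 0 <= A by apply: sumsq_ge0.
have key : 0 <= A * (A * B - C ^+ 2).
  have -> : A * (A * B - C ^+ 2) = \sum_j (C * a j - A * b j) ^+ 2.
    have E j : (C * a j - A * b j) ^+ 2 =
       C ^+ 2 * a j ^+ 2 - (2 * C * A) * (a j * b j) + A ^+ 2 * b j ^+ 2 by ring.
    rewrite (eq_bigr _ (fun j _ => E j)) big_split sumrB /= -!mulr_sumr -/A -/B -/C.
    ring.
  by apply: sumsq_ge0.
have [A00|Apos] := eqVneq A 0.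
  have a0 j : a j = 0.
    have : a j ^+ 2 <= A.
      rewrite /A (bigD1 j) //= lerDl; apply: sumr_ge0 => i _; exact: sqr_ge0.
    by rewrite A00 => h; apply/eqP; rewrite -sqrf_eq0 eq_le h sqr_ge0.
  rewrite /C big1 ?expr0n ?mulr0 //=; last by move=> j _; rewrite a0 mul0r.
  by rewrite mulr_ge0 // sumsq_ge0.
have Ap : 0 < A by rewrite lt_def Apos A0.
by rewrite -subr_ge0; move: key; rewrite pmulr_rge0.
Qed.

Lemma CS (I : finType) (a b : I -> R) :
  \sum_j a j * b j <= Num.sqrt (\sum_j a j ^+ 2) * Num.sqrt (\sum_j b j ^+ 2).
Proof.
rewrite -sqrtrM; last exact: sumsq_ge0.
apply: (le_trans (ler_norm _)).
by rewrite -sqrtr_sqr ler_sqrt ?CS_sq // mulr_ge0 // sumsq_ge0.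
Qed.

Lemma frobE m k (A : 'M[R]_(m, k)) :
  frob A = Num.sqrt (\sum_(p : 'I_m * 'I_k) A p.1 p.2 ^+ 2).
Proof. by rewrite /frob pair_bigA. Qed.

Lemma frob_ge0 m k (A : 'M[R]_(m, k)) : 0 <= frob A.
Proof. exact: sqrtr_ge0. Qed.

Lemma frob_sqr m k (A : 'M[R]_(m, k)) :
  frob A ^+ 2 = \sum_(p : 'I_m * 'I_k) A p.1 p.2 ^+ 2.
Proof. by rewrite frobE sqr_sqrtr // sumsq_ge0. Qed.

Lemma frob_sqr2 m k (A : 'M[R]_(m, k)) :
  frob A ^+ 2 = \sum_i \sum_j A i j ^+ 2.
Proof. by rewrite frob_sqr pair_bigA. Qed.

Definition mdot m k (A B : 'M[R]_(m, k)) := \sum_(p : 'I_m * 'I_k) A p.1 p.2 * B p.1 p.2.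

Lemma mdot_le m k (A B : 'M[R]_(m, k)) : mdot A B <= frob A * frob B.
Proof. by rewrite !frobE; apply: CS. Qed.

Lemma mdotC m k (A B : 'M[R]_(m, k)) : mdot A B = mdot B A.
Proof. by apply: eq_bigr => p _; rewrite mulrC. Qed.

Lemma frob_sqrD m k (A B : 'M[R]_(m, k)) :
  frob (A + B) ^+ 2 = frob A ^+ 2 + 2 * mdot A B + frob B ^+ 2.
Proof.
rewrite !frob_sqr /mdot mulr_sumr -!big_split /=; apply: eq_bigr => p _.
rewrite mxE; ring.
Qed.

Lemma frobD m k (A B : 'M[R]_(m, k)) : frob (A + B) <= frob A + frob B.
Proof.
rewrite -(ler_pXn2r (isT : (0 < 2)%N)) ?nnegrE ?addr_ge0 ?frob_ge0 //.
rewrite frob_sqrD sqrrD -mulr_natr; have := mdot_le A B; lra.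
Qed.

Lemma frobZ m k (c : R) (A : 'M[R]_(m, k)) : frob (c *: A) = `|c| * frob A.
Proof.
rewrite !frobE -sqrtr_sqr -sqrtrM; last exact: sqr_ge0.
congr Num.sqrt; rewrite mulr_sumr; apply: eq_bigr => p _.
by rewrite mxE exprMn.
Qed.

Lemma frobN m k (A : 'M[R]_(m, k)) : frob (- A) = frob A.
Proof. by rewrite -scaleN1r frobZ normrN normr1 mul1r. Qed.

Lemma mdot_abs m k (A B : 'M[R]_(m, k)) : `|mdot A B| <= frob A * frob B.
Proof.
rewrite ler_norml mdot_le andbT lerNl.
have -> : - mdot A B = mdot (- A) B.
  by rewrite /mdot -sumrN; apply: eq_bigr => p _; rewrite mxE mulNr.
by apply: le_trans (mdot_le _ _) _; rewrite frobN.
Qed.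

Lemma frobB m k (A B : 'M[R]_(m, k)) : frob (A - B) = frob (B - A).
Proof. by rewrite -frobN opprB. Qed.

Lemma frob_sum m k (I : finType) (F : I -> 'M[R]_(m, k)) :
  frob (\sum_i F i) <= \sum_i frob (F i).
Proof.
apply: (big_ind2 (fun x y => frob x <= y)).
- by rewrite frobE big1 ?sqrtr0 // => p _; rewrite mxE expr0n.
- by move=> x1 x2 y1 y2 h1 h2; apply: le_trans (frobD _ _) (lerD h1 h2).
- by move=> i _.
Qed.

Lemma frob_tr m k (A : 'M[R]_(m, k)) : frob A^T = frob A.
Proof.
rewrite /frob exchange_big /=; congr Num.sqrt; apply: eq_bigr => i _;
by apply: eq_bigr => j _; rewrite mxE.
Qed.

Lemma frob_mul m k p (A : 'M[R]_(m, k)) (B : 'M[R]_(k, p)) :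
  frob (A *m B) <= frob A * frob B.
Proof.
rewrite -(ler_pXn2r (isT : (0 < 2)%N)) ?nnegrE ?mulr_ge0 ?frob_ge0 //.
rewrite exprMn !frob_sqr2.
have step i l : (A *m B) i l ^+ 2 <= (\sum_j A i j ^+ 2) * (\sum_j B j l ^+ 2).
  by rewrite mxE; apply: CS_sq.
apply: le_trans (_ : \sum_i \sum_l (\sum_j A i j ^+ 2) * (\sum_j B j l ^+ 2) <= _).
  by apply: ler_sum => i _; apply: ler_sum => l _; exact: step.
rewrite mulr_suml; rewrite le_eqVlt; apply/orP; left; apply/eqP; apply: eq_bigr => i _.
by rewrite -mulr_sumr exchange_big.
Qed.

Definition rdot n (u v : 'rV[R]_n) := \sum_j u 0 j * v 0 j.

Lemma rdot_mdot n (u v : 'rV[R]_n) : rdot u v = mdot u v.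
Proof. by rewrite /mdot /rdot -(pair_bigA _ (fun i j => u i j * v i j)) big_ord1. Qed.

Lemma rdot_le n (u v : 'rV[R]_n) : rdot u v <= frob u * frob v.
Proof. by rewrite rdot_mdot mdot_le. Qed.

Lemma frob_row_sqr n (u : 'rV[R]_n) : frob u ^+ 2 = rdot u u.
Proof. by rewrite frob_sqr2 big_ord1; apply: eq_bigr => j _; rewrite expr2. Qed.

Lemma rdot_test n (e : 'rV[R]_n) (c : R) : 0 <= c ->
  (forall u, rdot e u <= c * frob u) -> frob e <= c.
Proof.
move=> c0 h; have := h e; rewrite -frob_row_sqr expr2.
have [->|nz] := eqVneq (frob e) 0; first by [].
have fp : 0 < frob e by rewrite lt_def nz frob_ge0.
by rewrite ler_pM2r.
Qed.

Lemma rdotDl n (u v w : 'rV[R]_n) : rdot (u + v) w = rdot u w + rdot v w.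
Proof. by rewrite /rdot -big_split; apply: eq_bigr => j _; rewrite mxE mulrDl. Qed.
Lemma rdotNl n (u w : 'rV[R]_n) : rdot (- u) w = - rdot u w.
Proof. by rewrite /rdot -sumrN; apply: eq_bigr => j _; rewrite mxE mulNr. Qed.
Lemma rdotBl n (u v w : 'rV[R]_n) : rdot (u - v) w = rdot u w - rdot v w.
Proof. by rewrite rdotDl rdotNl. Qed.
Lemma rdotZl n c (u w : 'rV[R]_n) : rdot (c *: u) w = c * rdot u w.
Proof. by rewrite /rdot mulr_sumr; apply: eq_bigr => j _; rewrite mxE mulrA. Qed.

Lemma frob_rows N n (A : 'M[R]_(N, n)) :
  frob A ^+ 2 = \sum_i frob (row i A) ^+ 2.
Proof.
rewrite frob_sqr2; apply: eq_bigr => i _; rewrite frob_sqr2 big_ord1.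
by apply: eq_bigr => j _; rewrite mxE.
Qed.

Lemma sum_rows_le N n (A : 'M[R]_(N, n)) :
  \sum_i frob (row i A) <= Num.sqrt N%:R * frob A.
Proof.
have := CS (fun i : 'I_N => frob (row i A)) (fun _ => 1).
under eq_bigr do rewrite mulr1.
rewrite -frob_rows sqrtr_sqr ger0_norm ?frob_ge0 // => h; apply: le_trans h _.
rewrite mulrC; rewrite le_eqVlt; apply/orP; left; apply/eqP; congr (_ * _); congr Num.sqrt.
by rewrite (eq_bigr (fun _ => 1)) ?sumr_const ?card_ord // => i _; rewrite expr1n.
Qed.

End LA.
Section LA2.
Variable R : realType.

Lemma frob_eq0 m k (A : 'M[R]_(m, k)) : frob A = 0 -> A = 0.
Proof.
move=> h; have : frob A ^+ 2 = 0 by rewrite h expr0n.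
rewrite frob_sqr => /eqP; rewrite psumr_eq0; last by move=> p _; exact: sqr_ge0.
move=> /allP H; apply/matrixP => i j; rewrite mxE.
by have := H (i, j) (mem_index_enum _); rewrite /= sqrf_eq0 => /eqP.
Qed.

Definition qf n (H : 'M[R]_n) (x y : 'rV[R]_n) :=
  \sum_j \sum_l x 0 j * H j l * y 0 l.

Lemma qf_quad n (H : 'M[R]_n) (v : 'rV[R]_n) : (v *m H *m v^T) 0 0 = qf H v v.
Proof.
rewrite /qf mxE exchange_big /=; apply: eq_bigr => l _; rewrite !mxE mulr_suml.
by apply: eq_bigr.
Qed.

Lemma qf_rdot n (H : 'M[R]_n) (w u : 'rV[R]_n) : rdot (w *m H) u = qf H w u.
Proof.
rewrite /qf /rdot exchange_big /=; apply: eq_bigr => l _; rewrite !mxE mulr_suml.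
by apply: eq_bigr => j _.
Qed.

Lemma qf_sym n (H : 'M[R]_n) (w u : 'rV[R]_n) : H^T = H -> qf H w u = qf H u w.
Proof.
move=> HT; rewrite /qf exchange_big /=; apply: eq_bigr => l _; apply: eq_bigr => j _.
have -> : H j l = H l j by rewrite -{1}HT mxE.
ring.
Qed.

Lemma qf_expand n (H : 'M[R]_n) (x u : 'rV[R]_n) (t : R) :
  qf H (x + t *: u) (x + t *: u) = qf H x x + t * (qf H x u + qf H u x) + t ^+ 2 * qf H u u.
Proof.
rewrite /qf; transitivity (\sum_j \sum_l (x 0 j * H j l * x 0 l + t * (x 0 j * H j l * u 0 l
   + u 0 j * H j l * x 0 l) + t ^+ 2 * (u 0 j * H j l * u 0 l))).
  by apply: eq_bigr => j _; apply: eq_bigr => l _; rewrite !mxE; ring.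
under eq_bigr => j _ do rewrite !big_split /= -!mulr_sumr big_split /=.
by rewrite !big_split /= -!mulr_sumr big_split.
Qed.

Lemma loew_quad n mu L (H : 'M[R]_n) v : loewner_between mu L H ->
  mu * frob v ^+ 2 <= qf H v v <= L * frob v ^+ 2.
Proof. by move=> /(_ v); rewrite qf_quad. Qed.

Lemma loewner_unit n mu L (H : 'M[R]_n) : 0 < mu -> loewner_between mu L H ->
  H \in unitmx.
Proof.
move=> mu0 hl; rewrite -row_free_unit; apply: inj_row_free => v vH0.
have /andP[h _] := loew_quad v hl.
move: h; rewrite -qf_rdot vH0 /rdot big1 => [h|j _]; last by rewrite mxE mul0r.
apply: frob_eq0; apply/eqP; rewrite -sqrf_eq0 eq_le sqr_ge0 andbT.
by rewrite -(pmulr_rle0 _ mu0).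
Qed.

Lemma inv_bound n mu L (H : 'M[R]_n) (v : 'rV[R]_n) : 0 < mu ->
  loewner_between mu L H -> frob (v *m invmx H) <= frob v / mu.
Proof.
move=> mu0 hl; have Hu := loewner_unit mu0 hl.
set w := v *m invmx H.
have wH : w *m H = v by rewrite /w mulmxKV.
have /andP[h _] := loew_quad w hl.
move: h; rewrite -qf_rdot wH => h.
have h2 := le_trans h (rdot_le v w).
rewrite ler_pdivlMr //.
have [w0|nz] := eqVneq (frob w) 0; first by rewrite w0 mul0r frob_ge0.
have fp : 0 < frob w by rewrite lt_def nz frob_ge0.
by move: h2; rewrite expr2 mulrA ler_pM2r // mulrC.
Qed.

Lemma psd_cs n mu L (H : 'M[R]_n) (w u : 'rV[R]_n) : 0 < mu -> H^T = H ->
  loewner_between mu L H -> qf H w u <= L * frob w * frob u.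
Proof.
move=> mu0 HT hl.
have [u0|unz] := eqVneq (frob u) 0.
  have u00 : u = 0 by apply: frob_eq0.
  rewrite u0 mulr0 /qf big1 // => j _; rewrite big1 // => l _; rewrite u00 mxE mulr0 //.
have up : 0 < frob u by rewrite lt_def unz frob_ge0.
set a := qf H w w; set b := qf H w u; set c := qf H u u.
have /andP[ha1 ha2] := loew_quad w hl.
have /andP[hc1 hc2] := loew_quad u hl.
have u2 : 0 < frob u ^+ 2 by rewrite exprn_gt0.
have L0 : 0 <= L.
  have := le_trans hc1 hc2; rewrite ler_pM2r // => h; exact: le_trans (ltW mu0) h.
have cp : 0 < c by apply: lt_le_trans hc1; apply: mulr_gt0.
have a0 : 0 <= a by apply: le_trans ha1; apply: mulr_ge0; [exact: ltW|exact: sqr_ge0].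
have q t : 0 <= a + t * (2 * b) + t ^+ 2 * c.
  have := loew_quad (w + t *: u) hl => /andP[h _].
  rewrite qf_expand (qf_sym u w HT) -/a -/b -/c in h.
  have h0 : 0 <= mu * frob (w + t *: u) ^+ 2 by apply: mulr_ge0; [exact: ltW|exact: sqr_ge0].
  by apply: le_trans h0 (le_trans h _); rewrite le_eqVlt; apply/orP; left; apply/eqP; ring.
have hb : b ^+ 2 <= a * c.
  have := q (- b / c) => h; rewrite -subr_ge0.
  have -> : a * c - b ^+ 2 = c * (a + (- b / c) * (2 * b) + (- b / c) ^+ 2 * c).
    by field; rewrite gt_eqF.
  by rewrite mulr_ge0 // ltW.
have hb2 : b ^+ 2 <= (L * frob w * frob u) ^+ 2.
  apply: le_trans hb _.
  have -> : (L * frob w * frob u) ^+ 2 = (L * frob w ^+ 2) * (L * frob u ^+ 2) by ring.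
  by apply: ler_pM => //; apply: ltW.
apply: le_trans (ler_norm b) _.
by rewrite -(ler_pXn2r (isT : (0 < 2)%N)) ?nnegrE ?mulr_ge0 ?frob_ge0 // real_normK ?num_real.
Qed.

End LA2.
Section LA3.
Variable R : realType.

Lemma rdotC n (u v : 'rV[R]_n) : rdot u v = rdot v u.
Proof. by apply: eq_bigr => j _; rewrite mulrC. Qed.

Lemma rdot_sumr n (I : finType) (F : I -> 'rV[R]_n) w :
  rdot (\sum_i F i) w = \sum_i rdot (F i) w.
Proof.
rewrite /rdot exchange_big /=; apply: eq_bigr => j _.
by rewrite summxE mulr_suml.
Qed.

Variables (N n : nat) (mu L : R) (Hs : 'I_N -> 'M[R]_n).
Hypothesis mu0 : 0 < mu.
Hypothesis N0 : (0 < N)%N.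
Hypothesis hl : forall i, loewner_between mu L (Hs i).

Definition Aavg := N%:R^-1 *: \sum_i invmx (Hs i).

Lemma Nr0 : 0 < (N%:R : R).
Proof. by rewrite ltr0n. Qed.

Lemma vA_sum (v : 'rV[R]_n) : v *m Aavg = N%:R^-1 *: \sum_i v *m invmx (Hs i).
Proof. by rewrite /Aavg -scalemxAr mulmx_sumr. Qed.

Lemma A_bound (v : 'rV[R]_n) : frob (v *m Aavg) <= frob v / mu.
Proof.
rewrite vA_sum frobZ ger0_norm ?invr_ge0 ?ler0n //.
rewrite ler_pdivrMl ?Nr0 //.
apply: le_trans (frob_sum _) _.
apply: le_trans (ler_sum _ (fun i _ => inv_bound v mu0 (hl i))) _.
by rewrite sumr_const card_ord mulr_natl.
Qed.

Lemma A_unit : Aavg \in unitmx.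
Proof.
rewrite -row_free_unit; apply: inj_row_free => w wA0.
pose i0 := Ordinal N0.
have key i : 0 <= rdot (w *m invmx (Hs i)) w /\
   (rdot (w *m invmx (Hs i)) w = 0 -> w = 0).
  have Hu := loewner_unit mu0 (hl i).
  set u := w *m invmx (Hs i).
  have wH : u *m Hs i = w by rewrite /u mulmxKV.
  have -> : rdot u w = qf (Hs i) u u by rewrite -wH rdotC qf_rdot.
  have /andP[h _] := loew_quad u (hl i).
  have h0 : 0 <= mu * frob u ^+ 2 by apply: mulr_ge0; [exact: ltW|exact: sqr_ge0].
  split; first exact: le_trans h0 h.
  move=> q0; move: h; rewrite q0 => h.
  have : frob u ^+ 2 <= 0 by rewrite -(pmulr_rle0 _ mu0).
  have u2 := sqr_ge0 (frob u).
  move=> h2; have : frob u ^+ 2 = 0 by apply/eqP; rewrite eq_le h2 u2.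
  move/eqP; rewrite sqrf_eq0 => /eqP/frob_eq0 u0.
  by rewrite -wH u0 mul0mx.
have : rdot (w *m Aavg) w = 0.
  by rewrite wA0 /rdot big1 // => j _; rewrite mxE mul0r.
rewrite vA_sum rdotZl => /eqP; rewrite mulf_eq0 invr_eq0 pnatr_eq0 (gtn_eqF N0) /=.
rewrite rdot_sumr psumr_eq0; last by move=> i _; case: (key i).
move=> /allP /(_ i0 (mem_index_enum _)) /eqP.
by case: (key i0) => _.
Qed.

End LA3.
Section Calc.
Variable R : realType.
Variable n : nat.
Implicit Types (g : 'rV[R]_n -> R) (a d p : 'rV[R]_n).

Lemma line_fun_eq g a d t :
  (fun h : R => h^-1 *: (((fun s : R => g (s *: d + a)) \o shift t) (h *: 1)
        - (fun s : R => g (s *: d + a)) t)) =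
  (fun h : R => h^-1 *: ((g \o shift (t *: d + a)) (h *: d) - g (t *: d + a))).
Proof.
apply: funext => h /=; congr (_ *: (_ - _)); congr g.
by rewrite [h%:A]mulr1 scalerDl addrA.
Qed.

Lemma line_derivable g a d t : differentiable g (t *: d + a) ->
  derivable (fun s : R => g (s *: d + a)) t 1.
Proof.
move=> dg; rewrite /derivable line_fun_eq.
by have := @diff_derivable _ _ _ g _ d dg.
Qed.

Lemma line_derive g a d t :
  'D_1 (fun s : R => g (s *: d + a)) t = 'D_d g (t *: d + a).
Proof. by rewrite /derive line_fun_eq. Qed.

Lemma line_is_derive g a d t : differentiable g (t *: d + a) ->
  is_derive t 1 (fun s : R => g (s *: d + a)) ('D_d g (t *: d + a)).
Proof.
move=> dg; apply: DeriveDef; first exact: line_derivable.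
exact: line_derive.
Qed.

Lemma derive_expand g p (v : 'rV[R]_n) : differentiable g p ->
  'D_v g p = \sum_l v 0 l * partial l g p.
Proof.
move=> dg; rewrite deriveE // {1}(row_sum_delta v) linear_sum.
apply: eq_bigr => l _; rewrite linearZ /= /partial deriveE //.
Qed.

End Calc.
Section Schwarz.
Variable R : realType.
Variable n : nat.
Variable f : 'rV[R]_n -> R.
Hypothesis df : forall p, differentiable f p.

Lemma all_cont (phi : R -> R) (h : R) : (forall s, derivable phi s 1) ->
  {within `[0, h], continuous phi}.
Proof. by move=> dphi; apply: derivable_within_continuous => s _; exact: dphi. Qed.

Lemma delta_rep (a b x : 'rV[R]_n) (h k : R) :
  (forall p, differentiable (fun q => 'D_a f q) p) -> 0 < h -> 0 < k ->
  exists s t, [/\ 0 < s < h, 0 < t < k &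
    f (h *: a + (k *: b + x)) - f (h *: a + x) - (f (k *: b + x) - f x) =
    h * k * 'D_b (fun q => 'D_a f q) (t *: b + (s *: a + x))].
Proof.
move=> dF h0 k0.
pose phi := fun s : R => f (s *: a + (k *: b + x)) - f (s *: a + x).
pose dphi := fun s : R => 'D_a f (s *: a + (k *: b + x)) - 'D_a f (s *: a + x).
have phid (s : R) : is_derive s 1 phi (dphi s).
  by apply: is_deriveB; apply: line_is_derive.
have [s sin eq1] := MVT h0 (fun s _ => phid s) (all_cont (fun s => let: DeriveDef d _ := phid s in d)).
have eq1' : phi h - phi 0 = dphi s * h by rewrite eq1 subr0.
pose chi := fun t : R => 'D_a f (t *: b + (s *: a + x)).
have chid (t : R) : is_derive t 1 chi ('D_b (fun q => 'D_a f q) (t *: b + (s *: a + x))).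
  exact: line_is_derive.
have [t tin eq2] := MVT k0 (fun t _ => chid t) (all_cont (fun t => let: DeriveDef d _ := chid t in d)).
exists s, t; split.
- by move: sin; rewrite in_itv.
- by move: tin; rewrite in_itv.
have -> : f (h *: a + (k *: b + x)) - f (h *: a + x) - (f (k *: b + x) - f x) = phi h - phi 0.
  by rewrite /phi !scale0r !add0r.
rewrite eq1'.
have -> : dphi s = chi k - chi 0.
  by rewrite /dphi /chi scale0r add0r addrCA.
by rewrite eq2 subr0; ring.
Qed.

End Schwarz.
Section Schwarz2.
Variable R : realType.
Variable n : nat.

Lemma dist_small (u v x : 'rV[R]_n) (s t h c d : R) :
  0 < s < h -> 0 < t < h -> 0 < h -> `|u| + `|v| + 1 = c -> h = d / c -> 0 < d ->
  `|x - (t *: v + (s *: u + x))| < d.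
Proof.
move=> /andP[s0 sh] /andP[t0 th] h0 cE hE d0.
have c0 : 0 < c by rewrite -cE ltr_wpDl // addr_ge0.
rewrite addrA opprD addrCA subrr addr0 normrN.
apply: le_lt_trans (ler_normD _ _) _.
rewrite !normrZ !ger0_norm ?ltW //.
have : d = h * c by rewrite hE divfK // gt_eqF.
move=> ->; rewrite -cE mulrDr mulr1 mulrDr.
have nu := normr_ge0 u; have nv := normr_ge0 v.
have h1 : t * `|v| <= h * `|v| by rewrite ler_wpM2r // ltW.
have h2 : s * `|u| <= h * `|u| by rewrite ler_wpM2r // ltW.
lra.
Qed.

Lemma subr_trick (a b c : R) : a - b = (a - c) - (b - c).
Proof. ring. Qed.

Lemma tri4 (a b c d : R) : c = d -> `|a - b| <= `|a - c| + `|b - d|.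
Proof. by move=> <-; rewrite (subr_trick a b c) ler_normB. Qed.

Lemma two_thirds (w : R) : 0 <= w -> w / 3 + w / 3 <= w.
Proof. move=> w0; lra. Qed.

Lemma schwarz (f : 'rV[R]_n -> R) : C2 f -> forall j l x,
  partial l (partial j f) x = partial j (partial l f) x.
Proof.
move=> [d1 d2 c2] j l x.
set ej := basis_vec R j; set el := basis_vec R l.
set D1 := partial l (partial j f); set D2 := partial j (partial l f).
apply/eqP; rewrite -subr_eq0; apply/negPn/negP => nz.
set z := D1 x - D2 x.
have zp : 0 < `|z| by rewrite normr_gt0.
set eps := `|z| / 3.
have e0 : 0 < eps by rewrite divr_gt0.
have n1 : \forall t \near x, `|D1 x - D1 t| < eps.
  by move: (c2 j l x) => /cvgrPdist_lt /(_ _ e0).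
have n2 : \forall t \near x, `|D2 x - D2 t| < eps.
  by move: (c2 l j x) => /cvgrPdist_lt /(_ _ e0).
move: n1 => /nbhs_normP [d1' d1p h1].
move: n2 => /nbhs_normP [d2' d2p h2].
set del := Num.min d1' d2'.
have del0 : 0 < del by rewrite lt_min d1p d2p.
have hdel y : `|x - y| < del -> `|D1 x - D1 y| < eps /\ `|D2 x - D2 y| < eps.
  rewrite lt_min => /andP[a1 a2]; split; [exact: h1 | exact: h2].
set c := `|ej| + `|el| + 1.
have c0 : 0 < c by rewrite ltr_wpDl // addr_ge0.
set h := del / c.
have h0 : 0 < h by rewrite divr_gt0.
have [s1 [t1 [s1in t1in E1]]] := @delta_rep R n f d1 ej el x h h (d2 j) h0 h0.
have [s2 [t2 [s2in t2in E2]]] := @delta_rep R n f d1 el ej x h h (d2 l) h0 h0.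
have EE : D1 (t1 *: el + (s1 *: ej + x)) = D2 (t2 *: ej + (s2 *: el + x)).
  apply: (mulfI (_ : h * h != 0)); first by rewrite mulf_neq0 // gt_eqF.
  rewrite -[LHS]E1 -[RHS]E2 [h *: el + (h *: ej + x)]addrCA; ring.
have [p1a _] := hdel _ (@dist_small ej el x s1 t1 h c del s1in t1in h0 erefl erefl del0).
have cE2 : `|el| + `|ej| + 1 = c by rewrite /c (addrC `|el|).
have [_ p2b] := hdel _ (@dist_small el ej x s2 t2 h c del s2in t2in h0 cE2 erefl del0).
move: p1a p2b => /= p1a p2b.
have : `|z| < eps + eps.
  apply: le_lt_trans (tri4 (D1 x) (D2 x) EE) _.
  exact: ltrD p1a p2b.
have e2 : eps + eps <= `|z|.
  exact: two_thirds (normr_ge0 z).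
by move=> hz; have := lt_le_trans hz e2; rewrite ltxx.
Qed.

End Schwarz2.
Section GradZero.
Variable R : realType.

Lemma grad_zero (N n : nat) (f : 'I_N -> 'rV[R]_n -> R) (xs : 'rV[R]_n) :
  (0 < N)%N -> (forall i x, differentiable (f i) x) ->
  (forall x, x != xs -> N%:R^-1 * \sum_(i < N) f i xs < N%:R^-1 * \sum_(i < N) f i x) ->
  forall j, \sum_i partial j (f i) xs = 0.
Proof.
move=> N0 df hmin j.
set e := basis_vec R j.
pose h := fun (i : 'I_N) (t : R) => f i (t *: e + xs).
pose F := \sum_(i < N) h i.
have FE t : F t = \sum_i f i (t *: e + xs) by rewrite /F fct_sumE.
have hd i t : derivable (h i) t 1 by apply: line_derivable.
have Fd t : derivable F t 1 by apply: derivable_sum.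
have Nr : 0 < (N%:R : R)^-1 by rewrite invr_gt0 ltr0n.
have Fmin t : F 0 <= F t.
  rewrite !FE scale0r add0r.
  have [E|nE] := eqVneq (t *: e + xs) xs; first by rewrite E.
  by apply: ltW; rewrite -(ltr_pM2l Nr); apply: hmin.
have := @derive1_at_min R F (-1) 1 0 (le_trans (lerN10 R) ler01) (fun t _ => Fd t) _ (fun t _ => Fmin t).
move=> /(_ _) [].
  by rewrite in_itv /= ltrN10 ltr01.
move=> _; rewrite /F derive_sum // => D0; rewrite -[RHS]D0.
apply: eq_bigr => i _; rewrite /h line_derive scale0r add0r //.
Qed.

End GradZero.
Section Chi.
Variable R : realType.

Lemma chi_bound (psi dpsi : R -> R) (al be : R) :
  (forall t : R, is_derive t 1 psi (dpsi t)) ->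
  (forall t, 0 < t < 1 -> dpsi t <= al + be * (1 - t)) ->
  psi 1 - psi 0 <= al + be / 2.
Proof.
move=> hd hb.
pose P : R -> R := al *: id + be *: (id - (2^-1 : R) *: (id * id)).
have hP (t : R) : is_derive t 1 P (al + be * (1 - t)).
  apply: is_derive_eq.
  change ((al * 1) + be * (1 - 2^-1 * (t * 1 + t * 1)) = al + be * (1 - t)); by field.
pose chi := psi - P.
have hc (y : R) : is_derive y 1 chi (dpsi y - (al + be * (1 - y))).
  exact: is_deriveB.
have hc' : forall y : R, y \in `]0, 1[ -> is_derive y 1 chi (dpsi y - (al + be * (1 - y))).
  by move=> y _; exact: hc.
have cc : {within `[0, 1], continuous chi}.
  by apply: derivable_within_continuous => y _; case: (hc y).
have [c0 cin E] := MVT (ltr01 : (0:R) < 1) hc' cc.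
have : chi 1 - chi 0 <= 0.
  rewrite E subr0 mulr1 subr_le0; apply: hb; by move: cin; rewrite in_itv.
change (psi 1 - (al * 1 + be * (1 - 2^-1 * (1 * 1))) -
  (psi 0 - (al * 0 + be * (0 - 2^-1 * (0 * 0)))) <= 0 -> psi 1 - psi 0 <= al + be / 2).
have -> : psi 1 - (al * 1 + be * (1 - 2^-1 * (1 * 1))) -
  (psi 0 - (al * 0 + be * (0 - 2^-1 * (0 * 0)))) = (psi 1 - psi 0) - (al + be / 2) by field.
by rewrite subr_le0.
Qed.

End Chi.
Section GradLine.
Variable R : realType.
Variable n : nat.

Lemma grad_line (f : 'rV[R]_n -> R) (a d u : 'rV[R]_n) (t : R) : C2 f ->
  is_derive t 1 (fun s : R => rdot (gradient f (s *: d + a)) u)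
    (qf (hessian f (t *: d + a)) u d).
Proof.
move=> [d1 d2 c2].
pose h := fun (j : 'I_n) => u 0 j *: (fun s : R => partial j f (s *: d + a)).
have -> : (fun s : R => rdot (gradient f (s *: d + a)) u) = \sum_j h j.
  apply: funext => s; rewrite fct_sumE /rdot; apply: eq_bigr => j _.
  by rewrite /h mxE mulrC.
have hj j : is_derive t 1 (h j) (u 0 j *: 'D_d (partial j f) (t *: d + a)).
  by apply: is_deriveZ; apply: line_is_derive.
apply: is_derive_eq.
rewrite /qf; apply: eq_bigr => j _.
rewrite derive_expand // /GRing.scale /= mulr_sumr; apply: eq_bigr => l _.
by rewrite mxE; ring.
Qed.

End GradLine.
Section Apps.
Variable R : realType.
Variable n : nat.
Variables (f : 'rV[R]_n -> R) (mu L Lb : R).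
Hypothesis hC : C2 f.
Hypothesis mu0 : 0 < mu.
Hypothesis L0 : 0 <= L.
Hypothesis Lb0 : 0 <= Lb.
Hypothesis hl : forall x, loewner_between mu L (hessian f x).
Hypothesis hlip : forall x y, frob (hessian f x - hessian f y) <= Lb * frob (x - y).

Lemma hess_sym x : (hessian f x)^T = hessian f x.
Proof. by apply/matrixP => j l; rewrite !mxE (schwarz hC). Qed.

Lemma qfBm (A B : 'M[R]_n) u d : qf (A - B) u d = qf A u d - qf B u d.
Proof.
rewrite /qf -sumrB; apply: eq_bigr => j _; rewrite -sumrB; apply: eq_bigr => l _.
by rewrite !mxE; ring.
Qed.

Lemma qf_le (M : 'M[R]_n) u d : qf M u d <= frob u * frob M * frob d.
Proof.
rewrite -qf_rdot; apply: le_trans (rdot_le _ _) _.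
by rewrite ler_wpM2r ?frob_ge0 // frob_mul.
Qed.

Lemma rdot_is_ev (a b u : 'rV[R]_n) :
  rdot (gradient f b - gradient f a) u =
  (fun s : R => rdot (gradient f (s *: (b - a) + a)) u) 1 -
  (fun s : R => rdot (gradient f (s *: (b - a) + a)) u) 0.
Proof. by rewrite /= scale1r scale0r add0r subrK rdotBl. Qed.

Lemma grad_lip a b : frob (gradient f b - gradient f a) <= L * frob (b - a).
Proof.
apply: rdot_test; first by rewrite mulr_ge0 ?frob_ge0.
move=> u; rewrite rdot_is_ev.
have hb : forall t : R, 0 < t < 1 ->
    qf (hessian f (t *: (b - a) + a)) u (b - a) <= L * frob (b - a) * frob u + 0 * (1 - t).
  move=> t _; rewrite mul0r addr0 (qf_sym _ _ (hess_sym _)).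
  exact: (psd_cs _ _ mu0 (hess_sym _) (hl _)).
have := @chi_bound R _ _ (L * frob (b - a) * frob u) 0 (fun t => grad_line a (b - a) u t hC) hb.
by rewrite mul0r addr0.
Qed.

Lemma grad_taylor (xs xb xi : 'rV[R]_n) :
  frob (gradient f xb - gradient f xs - (xb - xs) *m hessian f xi) <=
  Lb * frob (xb - xs) * frob (xb - xi) + Lb * frob (xb - xs) ^+ 2 / 2.
Proof.
set d := xb - xs; set H0 := hessian f xi.
apply: rdot_test.
  by rewrite addr_ge0 ?divr_ge0 ?mulr_ge0 ?frob_ge0 ?sqr_ge0.
move=> u.
set c := qf H0 u d.
pose psi1 := fun s : R => rdot (gradient f (s *: d + xs)) u.
pose psi := psi1 - c *: id.
have hpsi (t : R) : is_derive t 1 psi (qf (hessian f (t *: d + xs)) u d - c *: 1).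
  by apply: is_deriveB; exact: grad_line.
have E : rdot (gradient f xb - gradient f xs - d *m H0) u = psi 1 - psi 0.
  change (rdot (gradient f xb - gradient f xs - d *m H0) u =
    (rdot (gradient f (1 *: d + xs)) u - c * 1) - (rdot (gradient f (0 *: d + xs)) u - c * 0)).
  rewrite scale1r scale0r add0r /d subrK !rdotBl.
  rewrite qf_rdot (qf_sym _ _ (hess_sym _)) -/c.
  ring.
rewrite E.
have := @chi_bound R _ _ (Lb * frob d * frob (xb - xi) * frob u)
   (Lb * frob d ^+ 2 * frob u) hpsi.
move=> h; apply: le_trans (h _) _; last first.
  by rewrite le_eqVlt; apply/orP; left; apply/eqP; field.
move=> t /andP[t0 t1].
change (qf (hessian f (t *: d + xs)) u d - c * 1 <=
  Lb * frob d * frob (xb - xi) * frob u + Lb * frob d ^+ 2 * frob u * (1 - t)).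
rewrite mulr1 /c -qfBm.
apply: le_trans (qf_le _ _ _) _.
have hp : t *: d + xs - xi = (xb - xi) - (1 - t) *: d.
  by apply/matrixP => p q; rewrite !mxE; ring.
have h1 := hlip (t *: d + xs) xi.
rewrite hp in h1.
have h2 : frob ((xb - xi) - (1 - t) *: d) <= frob (xb - xi) + (1 - t) * frob d.
  have := frobD (xb - xi) (- ((1 - t) *: d)).
  by rewrite frobN frobZ ger0_norm // subr_ge0 ltW.
have h3 : frob (hessian f (t *: d + xs) - H0) <= Lb * (frob (xb - xi) + (1 - t) * frob d).
  by apply: le_trans h1 _; apply: ler_wpM2l.
have fu := frob_ge0 u; have fd := frob_ge0 d.
apply: le_trans (_ : frob u * (Lb * (frob (xb - xi) + (1 - t) * frob d)) * frob d <= _).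
  apply: ler_wpM2r => //; apply: ler_wpM2l => //.
by rewrite le_eqVlt; apply/orP; left; apply/eqP; ring.
Qed.

End Apps.
Section Stack.
Variable R : realType.
Variables (N n : nat).

Lemma row_ones (x : 'rV[R]_n) i : row i (ones_times N x) = x.
Proof. by apply/rowP => j; rewrite !mxE big_ord1 !mxE mul1r. Qed.

Lemma avg_rows (M : 'M[R]_(N, n)) : avg M = N%:R^-1 *: \sum_i row i M.
Proof.
apply/rowP => j; rewrite /avg -scalemxAl !mxE summxE; congr (_ * _).
by apply: eq_bigr => i _; rewrite !mxE mul1r.
Qed.

Lemma row_newton (f : 'I_N -> 'rV[R]_n -> R) X S i :
  row i (newton_stack f X S) = row i S *m invmx (hessian (f i) (row i X)).
Proof. by apply/rowP => j; rewrite !mxE. Qed.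

Lemma row_grad (f : 'I_N -> 'rV[R]_n -> R) X i :
  row i (grad_stack f X) = gradient (f i) (row i X).
Proof. by apply/rowP => j; rewrite !mxE. Qed.

Lemma row_sub (A B : 'M[R]_(N, n)) i : row i (A - B) = row i A - row i B.
Proof. by apply/rowP => j; rewrite !mxE. Qed.

Lemma avgW (W : 'M[R]_N) (M : 'M[R]_(N, n)) : consensus_matrix W -> avg (W *m M) = avg M.
Proof.
move=> [_ _ _ hc _]; rewrite /avg -!scalemxAl mulmxA.
congr (_ *: (_ *m _)); apply/rowP => j; rewrite !mxE.
rewrite -[RHS](hc j); apply: eq_bigr => i _; by rewrite !mxE mul1r.
Qed.

Lemma avgB (A B : 'M[R]_(N, n)) (c : R) : avg (A - c *: B) = avg A - c *: avg B.
Proof. by rewrite /avg -!scalemxAl mulmxBr -scalemxAr scalerBr !scalerA mulrC. Qed.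

Lemma frobBle m k (a b : 'M[R]_(m, k)) : frob (a - b) <= frob a + frob b.
Proof. by apply: le_trans (frobD _ _) _; rewrite frobN. Qed.

Lemma sum_grad_zero (f : 'I_N -> 'rV[R]_n -> R) xs :
  (forall j, \sum_i partial j (f i) xs = 0) -> \sum_i gradient (f i) xs = 0.
Proof.
move=> h; apply/rowP => j; rewrite summxE mxE -[RHS](h j).
by apply: eq_bigr => i _; rewrite mxE.
Qed.

Lemma vec_id (v1 v2 v3 v4 d : 'rV[R]_n) (e : R) :
  d - e *: (v1 + v2 + v3 + (d + v4)) =
  (1 - e) *: d - e *: v4 - e *: v1 - e *: v2 - e *: v3.
Proof. by apply/rowP => j; rewrite !mxE; ring. Qed.

End Stack.
Section Arith.
Variable R : realType.



Lemma final_arith (eta mu gamma L Lb Nr r dn FX FY SX SY v1 v2 v3 v4 : R) :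
  0 < eta -> 0 < mu -> 0 < r -> Nr = r ^+ 2 -> 0 <= L -> 0 <= Lb -> 0 <= dn ->
  SX <= r * FX -> SY <= r * FY ->
  v4 <= dn * gamma / mu -> v1 <= Nr^-1 * SY / mu -> v2 <= Nr^-1 * (L * SX) / mu ->
  v3 <= Nr^-1 * (Lb * dn * SX + Nr * (Lb * dn ^+ 2 / 2)) / mu ->
  (1 - eta) * dn + eta * v4 + eta * v1 + eta * v2 + eta * v3 <=
  (1 - eta * (1 - gamma / mu)) * dn + eta * Lb / (mu * r) * FX * dn
  + eta * Lb / (2 * mu) * dn ^+ 2 + eta / (mu * r) * FY + eta * L / (mu * r) * FX.
Proof.
move=> e0 m0 r0 NE L0 Lb0 dn0 hSX hSY h4 h1 h2 h3.
have rn : r != 0 by rewrite gt_eqF.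
have mn : mu != 0 by rewrite gt_eqF.
have c0 : 0 <= (r ^+ 2 * mu)^-1 by rewrite invr_ge0 mulr_ge0 ?ltW // exprn_gt0.
have b1 : v1 <= FY / (mu * r).
  apply: le_trans h1 _; rewrite NE.
  have -> : (r ^+ 2)^-1 * SY / mu = SY * (r ^+ 2 * mu)^-1 by field; rewrite ?mn ?rn ?pnatr_eq0 ?andbT.
  have -> : FY / (mu * r) = (r * FY) * (r ^+ 2 * mu)^-1 by field; rewrite ?mn ?rn ?pnatr_eq0 ?andbT.
  by apply: ler_wpM2r.
have b2 : v2 <= L * FX / (mu * r).
  apply: le_trans h2 _; rewrite NE.
  have -> : (r ^+ 2)^-1 * (L * SX) / mu = (L * SX) * (r ^+ 2 * mu)^-1 by field; rewrite ?mn ?rn ?pnatr_eq0 ?andbT.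
  have -> : L * FX / (mu * r) = (L * (r * FX)) * (r ^+ 2 * mu)^-1 by field; rewrite ?mn ?rn ?pnatr_eq0 ?andbT.
  by apply: ler_wpM2r => //; apply: ler_wpM2l.
have b3 : v3 <= Lb * dn * FX / (mu * r) + Lb * dn ^+ 2 / (2 * mu).
  apply: le_trans h3 _; rewrite NE.
  have -> : (r ^+ 2)^-1 * (Lb * dn * SX + r ^+ 2 * (Lb * dn ^+ 2 / 2)) / mu =
     (Lb * dn * SX) * (r ^+ 2 * mu)^-1 + Lb * dn ^+ 2 / (2 * mu).
    by field; rewrite ?mn ?rn ?pnatr_eq0 ?andbT.
  have -> : Lb * dn * FX / (mu * r) = (Lb * dn * (r * FX)) * (r ^+ 2 * mu)^-1 by field; rewrite ?mn ?rn ?pnatr_eq0 ?andbT.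
  rewrite lerD2r; apply: ler_wpM2r => //; apply: ler_wpM2l => //.
  exact: mulr_ge0.
have E : (1 - eta * (1 - gamma / mu)) * dn + eta * Lb / (mu * r) * FX * dn
  + eta * Lb / (2 * mu) * dn ^+ 2 + eta / (mu * r) * FY + eta * L / (mu * r) * FX =
  (1 - eta) * dn + eta * (dn * gamma / mu) + eta * (FY / (mu * r))
  + eta * (L * FX / (mu * r)) + eta * (Lb * dn * FX / (mu * r) + Lb * dn ^+ 2 / (2 * mu)).
  by field; rewrite ?mn ?rn ?pnatr_eq0 ?andbT.
rewrite E.
have e1 := ler_wpM2l (ltW e0) h4.
have e2 := ler_wpM2l (ltW e0) b1.
have e3 := ler_wpM2l (ltW e0) b2.
have e4 := ler_wpM2l (ltW e0) b3.
lra.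
Qed.

End Arith.
Section Comb.
Variable R : realType.
Variable n : nat.

Lemma frob_comb5 (d a b c e : 'rV[R]_n) (t : R) : 0 <= t -> t <= 1 ->
  frob ((1 - t) *: d - t *: a - t *: b - t *: c - t *: e) <=
  (1 - t) * frob d + t * frob a + t * frob b + t * frob c + t * frob e.
Proof.
move=> t0 t1.
have ht : `|t| = t by rewrite ger0_norm.
have h1t : `|1 - t| = 1 - t by rewrite ger0_norm // subr_ge0.
apply: le_trans (frobBle _ _) _; rewrite frobZ ht lerD2r.
apply: le_trans (frobBle _ _) _; rewrite frobZ ht lerD2r.
apply: le_trans (frobBle _ _) _; rewrite frobZ ht lerD2r.
apply: le_trans (frobBle _ _) _; rewrite !frobZ ht h1t.
by [].
Qed.

End Comb.

Unset Implicit Arguments.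

Theorem theorem3 (R : realType) (N n : nat) (f : 'I_N -> 'rV[R]_n -> R)
  (mu L Lbar gamma eta : R) (xstar : 'rV[R]_n) (W : 'M[R]_N)
  (X Y : nat -> 'M[R]_(N, n)) :
  (2 <= N)%N -> (1 <= n)%N ->
  0 < mu -> mu <= L ->
  (forall i, C2 (f i)) ->
  (forall i x, loewner_between mu L (hessian (f i) x)) ->
  (forall i x y, frob (hessian (f i) x - hessian (f i) y) <= Lbar * frob (x - y)) ->
  (forall x, x != xstar ->
     N%:R^-1 * \sum_(i < N) f i xstar < N%:R^-1 * \sum_(i < N) f i x) ->
  (forall Xm : 'M[R]_(N, n), frob (H_tr f Xm - H_app f Xm) <= gamma) ->
  consensus_matrix W ->
  specnorm (W - N%:R^-1 *: const_mx 1) < 1 ->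
  (forall k, X k.+1 = W *m X k - eta *: newton_stack f (X k) (Y k)) ->
  (forall k, Y k.+1 = W *m Y k + grad_stack f (X k.+1) - grad_stack f (X k)) ->
  Y 0%N = grad_stack f (X 0%N) ->
  gamma < mu -> 0 < eta < 1 ->
  forall k : nat,
    let xb := avg (X k) in
    let g := avg (grad_stack f (X k)) in
    frob (avg (X k.+1) - xstar) <=
      (1 - eta * (1 - gamma / mu)) * frob (xb - xstar)
      + eta * Lbar / (mu * Num.sqrt N%:R) * frob (X k - ones_times N xb) * frob (xb - xstar)
      + eta * Lbar / (2 * mu) * frob (xb - xstar) ^+ 2
      + eta / (mu * Num.sqrt N%:R) * frob (Y k - ones_times N g)
      + eta * L / (mu * Num.sqrt N%:R) * frob (X k - ones_times N xb).
Proof.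
move=> hN hn mu0 muL hC hl hlip hmin hgam hW _ hX _ _ hgm /andP[eta0 eta1] k.
rewrite [in X in is_true X]/=.
set xb := avg (X k); set g := avg (grad_stack f (X k)).
have N0 : (0 < N)%N by apply: leq_trans hN.
have L0 : 0 <= L by apply: le_trans (ltW mu0) muL.
pose i0 := Ordinal N0.
have Lb0 : 0 <= Lbar.
  pose y := basis_vec R (Ordinal hn).
  have hy : 0 < frob (0 - y).
    rewrite lt_def frob_ge0 andbT; apply/eqP => /frob_eq0 /rowP /(_ (Ordinal hn)).
    rewrite !mxE !eqxx /= sub0r => /eqP; rewrite oppr_eq0 oner_eq0 //.
  have := le_trans (frob_ge0 _) (hlip i0 0 y).
  by rewrite pmulr_lge0.
have d1 i x : differentiable (f i) x by case: (hC i).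
have sgz := sum_grad_zero (grad_zero N0 d1 hmin).
set Xk := X k; set Yk := Y k.
pose x := fun i => row i Xk.
pose s := fun i => row i Yk.
pose Hs := fun i => hessian (f i) (x i).
pose A := Aavg Hs.
have hlH : forall i, loewner_between mu L (Hs i) by move=> i; exact: hl.
have Au := A_unit mu0 N0 hlH.
have Ab := A_bound mu0 N0 hlH.
pose d := xb - xstar.
pose P := N%:R^-1 *: \sum_i (s i - g) *m invmx (Hs i).
pose G1 := N%:R^-1 *: \sum_i (gradient (f i) (x i) - gradient (f i) xb).
pose e := fun i => gradient (f i) xb - gradient (f i) xstar - d *m Hs i.
pose G2 := N%:R^-1 *: \sum_i e i.
pose Htr := H_tr f Xk.
pose E := Htr - H_app f Xk.
have HappA : H_app f Xk = invmx A by [].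
have eg : g = N%:R^-1 *: \sum_i gradient (f i) (x i).
  by rewrite /g avg_rows; congr (_ *: _); apply: eq_bigr => i _; rewrite row_grad.
have eN : avg (newton_stack f Xk Yk) = N%:R^-1 *: \sum_i s i *m invmx (Hs i).
  by rewrite avg_rows; congr (_ *: _); apply: eq_bigr => i _; rewrite row_newton.
have F1 : avg (X k.+1) - xstar = d - eta *: (N%:R^-1 *: \sum_i s i *m invmx (Hs i)).
  by rewrite hX avgB avgW // eN /d addrAC.
have F2 : N%:R^-1 *: \sum_i s i *m invmx (Hs i) = P + g *m A.
  rewrite /P vA_sum -scalerDr -big_split /=; congr (_ *: _); apply: eq_bigr => i _.
  by rewrite mulmxBl subrK.
have F3 : g = G1 + G2 + d *m Htr.
  rewrite eg /G1 /G2 /Htr /H_tr -scalemxAr mulmx_sumr -!scalerDr -!big_split /=.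
  have -> : \sum_i gradient (f i) (x i) =
      \sum_i gradient (f i) (x i) - \sum_i gradient (f i) xstar by rewrite sgz subr0.
  rewrite -sumrB; congr (_ *: _); apply: eq_bigr => i _.
  by apply/rowP => j; rewrite /e /Hs /x !mxE; ring.
have F4 : d *m Htr *m A = d + d *m (E *m A).
  have -> : Htr = invmx A + E by rewrite /E HappA addrC subrK.
  by rewrite mulmxDr mulmxDl mulmxKV // mulmxA.
have Main : avg (X k.+1) - xstar = d - eta *: (P + G1 *m A + G2 *m A + (d + d *m (E *m A))).
  by rewrite F1 F2 F3 (mulmxDl (G1 + G2)) (mulmxDl G1) F4 !addrA.
rewrite Main vec_id.
apply: le_trans (frob_comb5 _ _ _ _ _ (ltW eta0) (ltW eta1)) _.
set r := Num.sqrt N%:R.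
have r0 : 0 < r by rewrite sqrtr_gt0 ltr0n.
have NE : N%:R = r ^+ 2 by rewrite sqr_sqrtr ?ler0n.
have hSX : \sum_i frob (x i - xb) <= r * frob (Xk - ones_times N xb).
  have := sum_rows_le (Xk - ones_times N xb).
  by under eq_bigr do rewrite row_sub row_ones.
have hSY : \sum_i frob (s i - g) <= r * frob (Yk - ones_times N g).
  have := sum_rows_le (Yk - ones_times N g).
  by under eq_bigr do rewrite row_sub row_ones.
have Ninv0 : 0 <= (N%:R : R)^-1 by rewrite invr_ge0 ler0n.
have muinv0 : 0 <= mu^-1 by rewrite invr_ge0 ltW.
have b4 : frob (d *m (E *m A)) <= frob d * gamma / mu.
  rewrite mulmxA; apply: le_trans (Ab _) _; apply: ler_wpM2r => //.
  apply: le_trans (frob_mul _ _) _; apply: ler_wpM2l; first exact: frob_ge0.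
  exact: hgam.
have b1 : frob P <= N%:R^-1 * (\sum_i frob (s i - g)) / mu.
  rewrite /P frobZ ger0_norm // -mulrA; apply: ler_wpM2l => //.
  apply: le_trans (frob_sum _) _; rewrite mulr_suml; apply: ler_sum => i _.
  exact: inv_bound mu0 (hlH i).
have b2 : frob (G1 *m A) <= N%:R^-1 * (L * \sum_i frob (x i - xb)) / mu.
  apply: le_trans (Ab _) _; apply: ler_wpM2r => //.
  rewrite /G1 frobZ ger0_norm //; apply: ler_wpM2l => //.
  apply: le_trans (frob_sum _) _; rewrite mulr_sumr; apply: ler_sum => i _.
  exact: grad_lip (hC i) mu0 L0 (hl i) xb (x i).
have b3 : frob (G2 *m A) <= N%:R^-1 *
    (Lbar * frob d * (\sum_i frob (x i - xb)) + N%:R * (Lbar * frob d ^+ 2 / 2)) / mu.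
  apply: le_trans (Ab _) _; apply: ler_wpM2r => //.
  rewrite /G2 frobZ ger0_norm //; apply: ler_wpM2l => //.
  apply: le_trans (frob_sum _) _.
  have hei i : frob (e i) <= Lbar * frob d * frob (x i - xb) + Lbar * frob d ^+ 2 / 2.
    rewrite (frobB (x i) xb); exact: grad_taylor (hC i) Lb0 (hlip i) xstar xb (x i).
  apply: le_trans (ler_sum _ (fun i _ => hei i)) _.
  by rewrite big_split /= -mulr_sumr sumr_const card_ord mulr_natl.
exact: (final_arith eta0 mu0 r0 NE L0 Lb0 (frob_ge0 _) hSX hSY b4 b1 b2 b3).
Qed.
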